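(* Let $G=(V,E)$ be a network and consider a rate-$\omega$ LNEC code over a finite field $\mathbb{F}$ on $G$, as in the context. Let $t$ be a sink node with $C_t\ge\omega$ and $r$ a nonnegative integer with $r\le C_t-\omega$. Then the following three conditions are equivalent: (i) $\Phi(t)\cap\Delta(t,\xi)=\{0\}$ for all $\xi\in\mathcal{E}_t(r)$; (ii) $\Phi(t)\cap\Delta(t,\xi)=\{0\}$ for all $\xi\in\mathcal{A}_t(r)$; (iii) $\Phi(t)\cap\Delta(t,\xi)=\{0\}$ for all $\xi\in\mathcal{H}(r)$.
   Context: Network: $G=(V,E)$ is a finite directed acyclic graph (parallel edges allowed) with a single source node $s$ and a set of sink nodes $T\subseteq V\setminus\{s\}$; $s$ has no incoming edges and sink nodes have no outgoing edges. For an edge $e$, $\mathrm{tail}(e)$, $\mathrm{head}(e)$ are its tail and head; $\mathrm{In}(v)$, $\mathrm{Out}(v)$ are the incoming/outgoing edge sets of node $v$. A directed path is a sequence of edges $(e_1,\dots,e_m)$, $m\ge1$, with $\mathrm{tail}(e_{k+1})=\mathrm{head}(e_k)$. A cut separating node $v$ from node $u$ is a set of edges whose removal leaves no directed path from $u$ to $v$; $C_t$ is the minimum size of a cut separating sink $t$ from $s$. LNEC code: with rate $\omega\ge1$ and finite field $\mathbb{F}$, introduce imaginary source edges $d_1',\dots,d_\omega'$ ending at $s$ with $\mathrm{In}(s)=\{d_1',\dots,d_\omega'\}$, and for each $e\in E$ an imaginary error edge $e'$ with head $\mathrm{tail}(e)$; $E'=\{e':e\in E\}$ (for non-source nodes,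 $\mathrm{In}(v)$ contains only edges of $E$). The code is given by local encoding coefficients $k_{d,e}\in\mathbb{F}$ for $e\in E$, $d\in\mathrm{In}(\mathrm{tail}(e))$. Extended global encoding kernels are vectors in $\mathbb{F}^{\omega+|E|}$ indexed by $\{d_i'\}\cup E'$: $\tilde f_{d_i'}=1_{d_i'}$, $\tilde f_{e'}=1_{e'}$ (standard basis vectors), and recursively in topological order $\tilde f_e=\sum_{d\in\mathrm{In}(\mathrm{tail}(e))}k_{d,e}\tilde f_d+1_{e'}$. For sink $t$, $\mathrm{row}_t(d')=(\tilde f_{\hat e}(d'):\hat e\in\mathrm{In}(t))$. Message space $\Phi(t)=\langle\mathrm{row}_t(d_i'):1\le i\le\omega\rangle$; error space of $\xi\subseteq E$: $\Delta(t,\xi)=\langle\mathrm{row}_t(e'):e\in\xi\rangle$. Graph notions: for $\xi\subseteq E$ and a node $u$, $A\subseteq E$ is a cut separating $u$ from $\xi$ if every directed path in $G$ whose first edge lies in $\xi$ and whose last edge has head $u$ contains an edge of $A$. $\mathrm{mincut}(\xi,u)$ is the minimum size of such a cut. A minimum cut separating $u$ from $\xi$ is primary if it separates $u$ from every minimum cut separating $u$ from $\xi$; it exists and is unique. $\xi$ is primary for $u$ if $\xi$ is the primary minimum cut separating $u$ from $\xi$. For sink $t$ and integer $r\ge0$: $\mathcal{E}_t(r)=\{\xi\subseteq E:\mathrm{mincut}(\xi,t)\le r\}$, $\mathcal{A}_t(r)=\{\xi\subseteq E:|\xi|=r,\ \xi\text{ primary for }t\}$, $\mathcal{H}(r)=\{\xi\subseteq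 E:|\xi|\le r\}$. *)

(* Defs.v *)
From HB Require Import structures.
From mathcomp Require Import all_boot all_order all_algebra.
From mathcomp Require Import boolp.
Set Implicit Arguments. Unset Strict Implicit. Unset Printing Implicit Defensive.
Import GRing.Theory.
Local Open Scope ring_scope.

(* Network: nodes of a finType V; edges are 'I_m (parallel edges allowed),
   each edge e has tail (tl e) and head (hd e). *)

Definition adj (V : finType) (m : nat) (tl hd : 'I_m -> V) : rel 'I_m :=
  fun d e => hd d == tl e.

(* A directed path is represented as a nonempty sequence  e :: p  of edges
   with path (adj tl hd) e p; its first edge is e, its last edge is last e p. *)

Definition acyclic (V : finType) (m : nat) (tl hd : 'I_m -> V) : Prop :=
  forall (e : 'I_m) (p : seq 'I_m),
    path (adj tl hd) e p -> hd (last e p) != tl e.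

Definition network (V : finType) (m : nat) (tl hd : 'I_m -> V)
    (s : V) (T : {set V}) : Prop :=
  [/\ acyclic tl hd,
      (forall e, hd e != s),
      (forall v, v != s -> exists e, hd e == v),
      s \notin T &
      (forall t, t \in T -> forall e, tl e != t)].

Definition sep_nodes (V : finType) (m : nat) (tl hd : 'I_m -> V)
    (A : {set 'I_m}) (u v : V) : Prop :=
  forall (e : 'I_m) (p : seq 'I_m),
    path (adj tl hd) e p -> tl e = u -> hd (last e p) = v ->
    has (mem A) (e :: p).

(* C_t : minimum size of a cut separating t from s (setT is always a cut,
   so the minimum over the finite nonempty family is attained; default m) *)
Definition Ct (V : finType) (m : nat) (tl hd : 'I_m -> V) (s t : V) : nat :=
  \big[minn/m]_(A : {set 'I_m} | `[< sep_nodes tl hd A s t >]) #|A|.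

Definition sep_edges (V : finType) (m : nat) (tl hd : 'I_m -> V)
    (A xi : {set 'I_m}) (u : V) : Prop :=
  forall (e : 'I_m) (p : seq 'I_m),
    path (adj tl hd) e p -> e \in xi -> hd (last e p) = u ->
    has (mem A) (e :: p).

(* mincut(xi, u) (xi itself is a cut, so the default m is never reached
   below #|xi|) *)
Definition mincut (V : finType) (m : nat) (tl hd : 'I_m -> V)
    (xi : {set 'I_m}) (u : V) : nat :=
  \big[minn/m]_(A : {set 'I_m} | `[< sep_edges tl hd A xi u >]) #|A|.

Definition is_min_cut (V : finType) (m : nat) (tl hd : 'I_m -> V)
    (A xi : {set 'I_m}) (u : V) : Prop :=
  sep_edges tl hd A xi u /\ #|A| = mincut tl hd xi u.

Definition primary_cut (V : finType) (m : nat) (tl hd : 'I_m -> V)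
    (A xi : {set 'I_m}) (u : V) : Prop :=
  is_min_cut tl hd A xi u /\
  (forall B, is_min_cut tl hd B xi u -> sep_edges tl hd A B u).

Definition primary_for (V : finType) (m : nat) (tl hd : 'I_m -> V)
    (xi : {set 'I_m}) (u : V) : Prop :=
  primary_cut tl hd xi xi u.

(* Coordinates of extended kernels: 'I_(w + m); lshift m i is d_i',
   rshift w e is e'.  Local coefficients: kS i e = k_{d_i', e} (used when
   tail e = s), kE d e = k_{d, e} (used when head d = tail e). *)

Definition unitv (F : fieldType) (n : nat) (x : 'I_n) : 'rV[F]_n :=
  delta_mx 0 x.

Definition kernel_step (F : fieldType) (V : finType) (m w : nat)
    (tl hd : 'I_m -> V) (s : V) (kS : 'I_w -> 'I_m -> F)
    (kE : 'I_m -> 'I_m -> F) (g : 'I_m -> 'rV[F]_(w + m)) :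
    'I_m -> 'rV[F]_(w + m) :=
  fun e =>
    (if tl e == s then \sum_(i < w) kS i e *: unitv F (lshift m i)
     else \sum_(d < m | hd d == tl e) kE d e *: g d)
    + unitv F (rshift w e).

(* Extended global encoding kernels \tilde f_e.  On an acyclic graph the
   recursion (in topological order) is reached after m iterations
   (every directed path has at most m edges). *)
Definition gkernel (F : fieldType) (V : finType) (m w : nat)
    (tl hd : 'I_m -> V) (s : V) (kS : 'I_w -> 'I_m -> F)
    (kE : 'I_m -> 'I_m -> F) : 'I_m -> 'rV[F]_(w + m) :=
  iter m (kernel_step tl hd s kS kE) (fun _ => 0).

(* row_t(x) for an imaginary edge x, as a vector indexed by all edges, with
   zero entries outside In(t) *)
Definition row_t (F : fieldType) (V : finType) (m w : nat)
    (tl hd : 'I_m -> V) (s : V) (kS : 'I_w -> 'I_m -> F)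
    (kE : 'I_m -> 'I_m -> F) (t : V) (x : 'I_(w + m)) : 'rV[F]_m :=
  \row_(e < m) (if hd e == t then gkernel tl hd s kS kE e 0 x else 0).

(* message space Phi(t): row space of the rows row_t(d_i') *)
Definition Phi (F : fieldType) (V : finType) (m w : nat)
    (tl hd : 'I_m -> V) (s : V) (kS : 'I_w -> 'I_m -> F)
    (kE : 'I_m -> 'I_m -> F) (t : V) : 'M[F]_(w, m) :=
  \matrix_(i < w) row_t tl hd s kS kE t (lshift m i).

(* error space Delta(t, xi): row space of the rows row_t(e'), e in xi *)
Definition Delta (F : fieldType) (V : finType) (m w : nat)
    (tl hd : 'I_m -> V) (s : V) (kS : 'I_w -> 'I_m -> F)
    (kE : 'I_m -> 'I_m -> F) (t : V) (xi : {set 'I_m}) : 'M[F]_(m, m) :=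
  \matrix_(j < m) (if j \in xi then row_t tl hd s kS kE t (rshift w j) else 0).

Definition trivial_int (F : fieldType) (V : finType) (m w : nat)
    (tl hd : 'I_m -> V) (s : V) (kS : 'I_w -> 'I_m -> F)
    (kE : 'I_m -> 'I_m -> F) (t : V) (xi : {set 'I_m}) : Prop :=
  (Phi tl hd s kS kE t :&: Delta tl hd s kS kE t xi <= (0 : 'M[F]_m))%MS.

(* Main.v *)
Require Import Defs.
From HB Require Import structures.
From mathcomp Require Import all_boot all_order all_algebra.
From mathcomp Require Import boolp.
Set Implicit Arguments. Unset Strict Implicit. Unset Printing Implicit Defensive.

Lemma bigmin_le (I : eqType) (r : seq I) (P : pred I) (F : I -> nat) x0 i :
  i \in r -> P i -> \big[minn/x0]_(j <- r | P j) F j <= F i.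
Proof.
elim: r => [//|x r IH]; rewrite in_cons big_cons => /orP [/eqP <- -> | ir Pi].
  exact: geq_minl.
case: (P x); last exact: IH.
exact: leq_trans (geq_minr _ _) (IH ir Pi).
Qed.

Lemma bigmin_mem (I : eqType) (r : seq I) (P : pred I) (F : I -> nat) x0 :
  (forall j, F j <= x0) ->
  \big[minn/x0]_(j <- r | P j) F j = x0 \/
  exists i, [/\ i \in r, P i & \big[minn/x0]_(j <- r | P j) F j = F i].
Proof.
move=> Fle; elim: r => [|x r IH]; first by left; rewrite big_nil.
rewrite big_cons; case Px: (P x); last first.
  case: IH => [->|[i [ir Pi ->]]]; first by left.
  by right; exists i; rewrite in_cons ir orbT.
case: IH => [->|[i [ir Pi ->]]].
  by right; exists x; rewrite in_cons eqxx; split=> //; apply/minn_idPl.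
case: (leqP (F x) (F i)) => h.
  by right; exists x; rewrite in_cons eqxx; split=> //; apply/minn_idPl.
by right; exists i; rewrite in_cons ir orbT; split=> //; apply/minn_idPr/ltnW.
Qed.

Lemma mincut_le (V : finType) (m : nat) (tl hd : 'I_m -> V) xi u C :
  sep_edges tl hd C xi u -> mincut tl hd xi u <= #|C|.
Proof.
move=> h; rewrite /mincut; apply: bigmin_le; first exact: mem_index_enum.
exact/asboolP.
Qed.

Lemma sep_setT (V : finType) (m : nat) (tl hd : 'I_m -> V) xi u :
  sep_edges tl hd setT xi u.
Proof. by move=> e p _ _ _ /=; rewrite in_setT. Qed.

Lemma mincut_ex (V : finType) (m : nat) (tl hd : 'I_m -> V) xi u :
  exists C, sep_edges tl hd C xi u /\ #|C| = mincut tl hd xi u.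
Proof.
have := @bigmin_mem _ (index_enum {set 'I_m}) (fun A => `[< sep_edges tl hd A xi u >])
  (fun A => #|A|) m.
case.
- by move=> A; rewrite -[X in _ <= X]card_ord max_card.
- move=> h; exists setT; split; first exact: sep_setT.
  by rewrite /mincut h cardsT card_ord.
- by move=> [A [_ /asboolP h e]]; exists A; split=> //; rewrite /mincut e.
Qed.

Lemma Ct_le (V : finType) (m : nat) (tl hd : 'I_m -> V) s t C :
  sep_nodes tl hd C s t -> Ct tl hd s t <= #|C|.
Proof.
move=> h; rewrite /Ct; apply: bigmin_le; first exact: mem_index_enum.
exact/asboolP.
Qed.

Lemma sep_refl (V : finType) (m : nat) (tl hd : 'I_m -> V) X u :
  sep_edges tl hd X X u.
Proof. by move=> e p _ eX _ /=; rewrite eX. Qed.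

Lemma sep_monoY (V : finType) (m : nat) (tl hd : 'I_m -> V) (X Y Y' : {set 'I_m}) u :
  Y' \subset Y -> sep_edges tl hd X Y u -> sep_edges tl hd X Y' u.
Proof. by move=> /subsetP sY h e p pp eY; apply: h => //; apply: sY. Qed.

Lemma sep_trans (V : finType) (m : nat) (tl hd : 'I_m -> V) Z X Y u :
  sep_edges tl hd Z X u -> sep_edges tl hd X Y u -> sep_edges tl hd Z Y u.
Proof.
move=> hZ hX e p pp eY hl.
have /hasP [x xin xX] := hX e p pp eY hl.
move: xin; rewrite in_cons; case/orP => [/eqP xe|xp].
  by subst x; apply: hZ.
case/splitPr: xp pp hl => p1 p2.
rewrite cat_path last_cat /= => /and3P [_ _ pp2] hl.
have := hZ x p2 pp2 xX hl.
by rewrite /= has_cat /= => ->; rewrite !orbT.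
Qed.

Lemma mincut_add (V : finType) (m : nat) (tl hd : 'I_m -> V) X e u :
  mincut tl hd (e |: X) u <= (mincut tl hd X u).+1.
Proof.
have [C [hC <-]] := mincut_ex tl hd X u.
apply: (@leq_trans #|e |: C|); last by rewrite cardsU1; case: (e \in C).
apply: mincut_le => d p pp /setU1P [-> _ | dX hl].
  by rewrite /= in_setU1 eqxx.
have /hasP [x xin xC] := hC d p pp dX hl.
by apply/hasP; exists x => //; apply/setU1P; right.
Qed.

Lemma mincut_setT (V : finType) (m : nat) (tl hd : 'I_m -> V) s t :
  Ct tl hd s t <= mincut tl hd setT t.
Proof.
have [C [hC <-]] := mincut_ex tl hd setT t.
apply: Ct_le => e p pp _ hl; apply: hC => //; exact: in_setT.
Qed.

Lemma chain (V : finType) (m : nat) (tl hd : 'I_m -> V) t r :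
  r <= mincut tl hd setT t -> forall X : {set 'I_m}, mincut tl hd X t <= r ->
  exists Y : {set 'I_m}, X \subset Y /\ mincut tl hd Y t = r.
Proof.
move=> hT X; move hn: #|~: X| => n; elim: n X hn => [|n IH] X hn hX.
  move/eqP: hn; rewrite cards_eq0 => /eqP eX.
  have {}eX : X = setT by rewrite -[X]setCK eX setC0.
  by exists X; split=> //; apply/eqP; rewrite eqn_leq hX eX hT.
case: (ltngtP (mincut tl hd X t) r) => [lt|gt|eq]; last first.
- by exists X.
- by move: hX; rewrite leqNgt gt.
have [e eX] : exists e, e \notin X.
  have /card_gt0P [e] : 0 < #|~: X| by rewrite hn.
  by rewrite in_setC => ?; exists e.
have hn' : #|~: (e |: X)| = n.
  move: hn; rewrite setCU setIC -setDE (cardsD1 e) in_setC eX /= add1n => -[<-].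
  by congr #|_|; apply/setP => x; rewrite !inE.
have [Y [sY hY]] := IH (e |: X) hn' (leq_trans (mincut_add tl hd X e t) lt).
exists Y; split=> //; exact: subset_trans (subsetUr _ _) sY.
Qed.

Lemma mincut_of_cut (V : finType) (m : nat) (tl hd : 'I_m -> V) (P Y : {set 'I_m}) t :
  sep_edges tl hd P Y t -> #|P| = mincut tl hd Y t -> mincut tl hd P t = #|P|.
Proof.
move=> hP eP; apply/eqP; rewrite eqn_leq (mincut_le (@sep_refl _ _ tl hd P t)) /=.
have [C [hC <-]] := mincut_ex tl hd P t.
by rewrite eP; apply: mincut_le; apply: sep_trans hC hP.
Qed.

Lemma exists_primary (V : finType) (m : nat) (tl hd : 'I_m -> V) t r (xi : {set 'I_m}) :
  r <= mincut tl hd setT t -> mincut tl hd xi t <= r ->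
  exists eta : {set 'I_m}, [/\ #|eta| = r, primary_for tl hd eta t & sep_edges tl hd eta xi t].
Proof.
move=> hT hxi.
have [Y [sY hY]] := chain hT hxi.
have [P [hP eP]] := mincut_ex tl hd Y t.
pose Cand (Z : {set 'I_m}) := [/\ #|Z| = r, mincut tl hd Z t = r & sep_edges tl hd Z xi t].
have CP : Cand P.
  split; first by rewrite eP.
  - by rewrite (mincut_of_cut hP eP) eP.
  - exact: sep_monoY sY hP.
pose N (Z0 : {set 'I_m}) := [set Z | `[< Cand Z >] && `[< sep_edges tl hd Z0 Z t >]].
have CPb : `[< Cand P >] by apply/asboolP.
case: (@arg_maxnP _ P (fun Z => `[< Cand Z >]) (fun Z => #|N Z|) CPb).
move=> eta /asboolP [c1 c2 c3] hmax.
exists eta; split=> //.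
split.
  by split; [exact: sep_refl | rewrite c2].
move=> B [hB eB].
have CB : Cand B.
  split; first by rewrite eB.
  - by rewrite (mincut_of_cut hB eB) eB.
  - exact: sep_trans hB c3.
have sN : N eta \subset N B.
  apply/subsetP => Z; rewrite !inE => /andP [-> /asboolP h] /=.
  by apply/asboolP; apply: sep_trans hB h.
have : N B \subset N eta.
  have := hmax B (introT (asboolP _) CB).
  move=> le; rewrite -(subset_leqif_card sN).2 eqn_leq (subset_leq_card sN) /=.
  exact: le.
move/subsetP => /(_ B); rewrite !inE.
have -> : `[< Cand B >] by apply/asboolP.
have -> : `[< sep_edges tl hd B B t >] by apply/asboolP; apply: sep_refl.
by move=> /(_ isT) /andP [_ /asboolP].
Qed.
Import GRing.Theory.
Local Open Scope ring_scope.

Lemma path_uniq (V : finType) (m : nat) (tl hd : 'I_m -> V) :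
  acyclic tl hd -> forall e p, path (adj tl hd) e p -> uniq (e :: p).
Proof.
move=> ac e p; elim: p e => [//|x p IH] e /= /andP [a pp].
have := IH x pp => /= /andP [xp up]; rewrite xp up !andbT.
apply/negP => ein.
have : path (adj tl hd) e (x :: p) by rewrite /= a pp.
case/splitPr: ein => p1 p2; rewrite cat_path /= => /and3P [pp1 a2 _].
by move: (ac e p1 pp1); rewrite /adj in a2; rewrite a2.
Qed.

Lemma path_size (V : finType) (m : nat) (tl hd : 'I_m -> V) :
  acyclic tl hd -> forall e p, path (adj tl hd) e p -> (size p < m)%N.
Proof.
move=> ac e p pp; have /card_uniqP h := path_uniq ac pp.
change (size (e :: p) <= m)%N; rewrite -h.
by rewrite -[X in (_ <= X)%N]card_ord max_card.
Qed.

Definition Lop (F : fieldType) (V : finType) (m : nat) (tl hd : 'I_m -> V)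
  (K : 'I_m -> 'I_m -> F) (f : 'I_m -> F) : 'I_m -> F :=
  fun d => \sum_(c < m | hd c == tl d) K c d * f c.

Definition aff (F : fieldType) (V : finType) (m : nat) (tl hd : 'I_m -> V)
  (K : 'I_m -> 'I_m -> F) (b : 'I_m -> F) (f : 'I_m -> F) : 'I_m -> F :=
  fun d => b d + Lop tl hd K f d.

Definition fp (F : fieldType) (V : finType) (m : nat) (tl hd : 'I_m -> V)
  (K : 'I_m -> 'I_m -> F) (b : 'I_m -> F) : 'I_m -> F :=
  iter m (aff tl hd K b) (fun _ => 0).

Lemma sum_neq0 (F : fieldType) (I : finType) (P : pred I) (G : I -> F) :
  \sum_(i | P i) G i != 0 -> exists i, P i /\ G i != 0.
Proof.
case: (pickP (fun i => P i && (G i != 0))) => [i /andP [Pi Gi] _ | h].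
  by exists i.
rewrite big1 ?eqxx // => i Pi; move: (h i); rewrite Pi /= => /negbFE /eqP -> //.
Qed.

Lemma Lop_ext (F : fieldType) (V : finType) (m : nat) (tl hd : 'I_m -> V) K f g :
  (forall c, f c = g c) -> forall d, @Lop F V m tl hd K f d = Lop tl hd K g d.
Proof. by move=> h d; apply: eq_bigr => c _; rewrite h. Qed.

Lemma Lop_path (F : fieldType) (V : finType) (m : nat) (tl hd : 'I_m -> V) K f :
  forall n d, iter n (@Lop F V m tl hd K) f d != 0 ->
  exists e p, [/\ path (adj tl hd) e p, last e p = d & size p = n].
Proof.
elim=> [|n IH] d /=; first by move=> _; exists d, [::].
move/sum_neq0 => [c [hc]]; rewrite mulf_eq0 negb_or => /andP [_ /IH [e [p [pp lp sp]]]].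
exists e, (rcons p d); split.
- by rewrite rcons_path pp lp.
- by rewrite last_rcons.
- by rewrite size_rcons sp.
Qed.

Lemma Lop_nil (F : fieldType) (V : finType) (m : nat) (tl hd : 'I_m -> V) K f :
  acyclic tl hd -> forall d, iter m (@Lop F V m tl hd K) f d = 0.
Proof.
move=> ac d; apply/eqP; apply: contraT => /Lop_path [e [p [pp _ sp]]].
by have := path_size ac pp; rewrite sp ltnn.
Qed.

Lemma aff_diff (F : fieldType) (V : finType) (m : nat) (tl hd : 'I_m -> V) K b :
  forall n d, iter n.+1 (@aff F V m tl hd K b) (fun _ => 0) d
              - iter n (aff tl hd K b) (fun _ => 0) d = iter n (Lop tl hd K) b d.
Proof.
elim=> [|n IH] d.
  by rewrite /= /aff /Lop big1 ?addr0 ?subr0 // => c _; rewrite mulr0.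
rewrite [LHS]/= /aff opprD addrACA subrr add0r /Lop -sumrB.
by apply: eq_bigr => c _; rewrite -mulrBr IH.
Qed.

Lemma fp_fix (F : fieldType) (V : finType) (m : nat) (tl hd : 'I_m -> V) K b :
  acyclic tl hd -> forall d, @fp F V m tl hd K b d = aff tl hd K b (fp tl hd K b) d.
Proof.
move=> ac d; apply/eqP; rewrite eq_sym -subr_eq0.
by have := @aff_diff F V m tl hd K b m d; rewrite /fp => -> ; rewrite Lop_nil.
Qed.

Lemma fp_uniq (F : fieldType) (V : finType) (m : nat) (tl hd : 'I_m -> V) K b f :
  acyclic tl hd -> (forall d, f d = @aff F V m tl hd K b f d) ->
  forall d, f d = fp tl hd K b d.
Proof.
move=> ac hf.
pose dl := fun d => f d - fp tl hd K b d.
have hdl : forall d, dl d = Lop tl hd K dl d.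
  move=> d; rewrite /dl hf fp_fix // /aff opprD addrACA subrr add0r /Lop -sumrB.
  by apply: eq_bigr => c _; rewrite -mulrBr.
have hn : forall n d, dl d = iter n (Lop tl hd K) dl d.
  elim=> [//|n IH] d /=; rewrite hdl; exact: Lop_ext.
move=> d; apply/eqP; rewrite -subr_eq0; apply/eqP.
by have := hn m d; rewrite Lop_nil.
Qed.

Definition K0 (F : fieldType) (V : finType) (m : nat) (tl : 'I_m -> V) (s : V)
  (kE : 'I_m -> 'I_m -> F) : 'I_m -> 'I_m -> F :=
  fun c d => if tl d == s then 0 else kE c d.

Definition dlt (F : fieldType) (m : nat) (e : 'I_m) : 'I_m -> F :=
  fun d => (d == e)%:R.

Lemma gk_coord (F : fieldType) (V : finType) (m w : nat) (tl hd : 'I_m -> V) (s : V)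
    (kS : 'I_w -> 'I_m -> F) (kE : 'I_m -> 'I_m -> F) e :
  forall n d, iter n (kernel_step tl hd s kS kE) (fun _ => 0) d 0 (rshift w e)
   = iter n (aff tl hd (K0 tl s kE) (dlt F e)) (fun _ => 0) d.
Proof.
elim=> [|n IH] d; first by rewrite /= mxE.
rewrite [LHS]/= [RHS]/= /kernel_step /aff /Lop /K0 /dlt.
rewrite mxE addrC /unitv mxE eqxx eq_rshift /= eq_sym; congr (_ + _).
case: (tl d == s).
  rewrite summxE big1; last by move=> i _; rewrite !mxE eq_rlshift andbF mulr0.
  by rewrite big1 // => c _; rewrite mul0r.
by rewrite summxE; apply: eq_bigr => c _; rewrite !mxE IH.
Qed.

Lemma gk_fix (F : fieldType) (V : finType) (m w : nat) (tl hd : 'I_m -> V) (s : V)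
    (kS : 'I_w -> 'I_m -> F) (kE : 'I_m -> 'I_m -> F) e d :
  gkernel tl hd s kS kE d 0 (rshift w e) = fp tl hd (K0 tl s kE) (dlt F e) d.
Proof. by rewrite /gkernel gk_coord. Qed.

Lemma decomp (F : fieldType) (V : finType) (m : nat) (tl hd : 'I_m -> V) (s : V)
    (kE : 'I_m -> 'I_m -> F) (eta xi : {set 'I_m}) (t : V) (e : 'I_m) :
  acyclic tl hd -> sep_edges tl hd eta xi t -> e \in xi ->
  exists c : 'I_m -> F, forall d, hd d = t ->
    fp tl hd (K0 tl s kE) (dlt F e) d =
    \sum_(a in eta) c a * fp tl hd (K0 tl s kE) (dlt F a) d.
Proof.
move=> ac hsep exi.
set K := K0 tl s kE.
set H := fun a => fp tl hd K (dlt F a).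
pose K1 := fun c d => if d \in eta then 0 else K c d.
pose b1 := fun d => if d \in eta then 0 else dlt F e d.
pose h := fp tl hd K1 b1.
have LK1 : forall f d, Lop tl hd K1 f d = if d \in eta then 0 else Lop tl hd K f d.
  move=> f d; rewrite /Lop /K1; case: (d \in eta) => //.
  by rewrite big1 // => c _; rewrite mul0r.
pose S := fun d => dlt F e d + Lop tl hd K h d.
have hS : forall d, h d = if d \in eta then 0 else S d.
  move=> d; rewrite /h fp_fix // -/h /aff LK1 /b1 /S; case: (d \in eta) => //.
  by rewrite addr0.
have hpath : forall n d, iter n (aff tl hd K1 b1) (fun _ => 0) d != 0 ->
    exists p, [/\ path (adj tl hd) e p, last e p = d & ~~ has (mem eta) (e :: p)].
  elim=> [|n IH] d /=; first by rewrite eqxx.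
  rewrite {1}/aff LK1 /b1; case: ifP => [_|deta]; first by rewrite addr0 eqxx.
  case: (eqVneq d e) => [de _|dne].
    by exists [::]; split=> //=; rewrite orbF -de deta.
  rewrite /dlt (negbTE dne) add0r => /sum_neq0 [c [hc]].
  rewrite mulf_eq0 negb_or => /andP [_ /IH [p [pp lp np]]].
  exists (rcons p d); split.
  - by rewrite rcons_path pp lp.
  - by rewrite last_rcons.
  - move: np => /= /norP [e1 np].
    rewrite (negbTE e1) /=; apply/negP => /hasP [x]; rewrite mem_rcons in_cons.
    case/orP => [/eqP -> | xp]; first by rewrite inE deta.
    by move=> xe; move/hasP: np; apply; exists x.
have h0 : forall d, hd d = t -> h d = 0.
  move=> d hdt; apply/eqP; apply: contraT; rewrite /h /fp => /hpath [p [pp lp np]].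
  by move: np; rewrite (hsep e p pp exi) // lp.
exists S => d hdt.
have HK : forall a d, Lop tl hd K (H a) d = H a d - dlt F a d.
  by move=> a d'; rewrite /H [in RHS]fp_fix // /aff addrAC subrr add0r.
have sumd : forall d, \sum_(a in eta) S a * dlt F a d = if d \in eta then S d else 0.
  move=> d'; case: ifP => dt.
    rewrite (bigD1 d') //= /dlt eqxx mulr1 big1 ?addr0 // => a /andP [_ ad].
    by rewrite eq_sym (negbTE ad) mulr0.
  rewrite big1 // => a aeta; rewrite /dlt; case: eqP => [da|]; last by rewrite mulr0.
  by move: dt; rewrite da aeta.
pose R := fun d => h d + \sum_(a in eta) S a * H a d.
have Rfix : forall d, R d = aff tl hd K (dlt F e) R d.
  move=> d'; rewrite /aff /Lop /R.
  have -> : \sum_(c < m | hd c == tl d') K c d' * (h c + \sum_(a in eta) S a * H a c)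
      = Lop tl hd K h d' + \sum_(a in eta) S a * (H a d' - dlt F a d').
    rewrite /Lop; transitivity (\sum_(c < m | hd c == tl d')
        (K c d' * h c + \sum_(a in eta) S a * (K c d' * H a c))).
      apply: eq_bigr => c _; rewrite mulrDr mulr_sumr; congr (_ + _).
      by apply: eq_bigr => a _; rewrite mulrCA.
    rewrite big_split /=; congr (_ + _); rewrite exchange_big /=.
    by apply: eq_bigr => a _; rewrite -HK /Lop mulr_sumr.
  under [X in _ = _ + (_ + X)]eq_bigr do rewrite mulrBr.
  rewrite sumrB sumd addrA -/(Lop tl hd K h d') -/(S d') hS.
  case: (d' \in eta); first by rewrite add0r addrC subrK.
  by rewrite subr0.
have := fp_uniq ac Rfix d; rewrite /R h0 // add0r => <-.
by apply: eq_bigr.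
Qed.

Lemma Delta_sub (F : fieldType) (V : finType) (m w : nat) (tl hd : 'I_m -> V) (s : V)
    (kS : 'I_w -> 'I_m -> F) (kE : 'I_m -> 'I_m -> F) (t : V) (eta xi : {set 'I_m}) :
  acyclic tl hd -> sep_edges tl hd eta xi t ->
  (Delta tl hd s kS kE t xi <= Delta tl hd s kS kE t eta)%MS.
Proof.
move=> ac hsep; apply/row_subP => j; rewrite rowK; case: ifP => jx; last exact: sub0mx.
have [c hc] := decomp s kE ac hsep jx.
have -> : row_t tl hd s kS kE t (rshift w j) =
    \sum_(a in eta) c a *: row_t tl hd s kS kE t (rshift w a).
  apply/rowP => d; rewrite !mxE summxE; case: (eqVneq (hd d) t) => [hdt|hdt].
    rewrite gk_fix hc //; apply: eq_bigr => a _; rewrite !mxE hdt eqxx gk_fix //.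
  by rewrite big1 // => a _; rewrite !mxE (negbTE hdt) mulr0.
apply: summx_sub => a aeta; apply: scalemx_sub.
by have := row_sub a (Delta tl hd s kS kE t eta); rewrite rowK aeta.
Qed.

Lemma trivial_mono (F : fieldType) (V : finType) (m w : nat) (tl hd : 'I_m -> V) (s : V)
    (kS : 'I_w -> 'I_m -> F) (kE : 'I_m -> 'I_m -> F) (t : V) (eta xi : {set 'I_m}) :
  acyclic tl hd -> sep_edges tl hd eta xi t ->
  trivial_int tl hd s kS kE t eta -> trivial_int tl hd s kS kE t xi.
Proof.
move=> ac hsep; rewrite /trivial_int; apply: submx_trans.
by apply: capmxS => //; exact: Delta_sub.
Qed.

Local Close Scope ring_scope.

Theorem corollary10 (F : finFieldType) (V : finType) (m : nat)
    (tl hd : 'I_m -> V) (s : V) (T : {set V}) (w : nat)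
    (kS : 'I_w -> 'I_m -> F) (kE : 'I_m -> 'I_m -> F) (t : V) (r : nat) :
  network tl hd s T -> 0 < w -> t \in T ->
  w <= Ct tl hd s t -> r <= Ct tl hd s t - w ->
  [<-> (forall xi : {set 'I_m}, mincut tl hd xi t <= r ->
          trivial_int tl hd s kS kE t xi);
       (forall xi : {set 'I_m}, #|xi| = r -> primary_for tl hd xi t ->
          trivial_int tl hd s kS kE t xi);
       (forall xi : {set 'I_m}, #|xi| <= r ->
          trivial_int tl hd s kS kE t xi)].
Proof.
move=> [ac _ _ _ _] _ _ _ hr.
have hT : r <= mincut tl hd setT t.
  exact: leq_trans (leq_trans hr (leq_subr _ _)) (mincut_setT tl hd s t).
have key : forall xi : {set 'I_m}, mincut tl hd xi t <= r ->
    (forall eta : {set 'I_m}, #|eta| = r -> primary_for tl hd eta t ->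
          trivial_int tl hd s kS kE t eta) -> trivial_int tl hd s kS kE t xi.
  move=> xi hxi h2; have [eta [c1 c2 c3]] := exists_primary hT hxi.
  exact: trivial_mono ac c3 (h2 eta c1 c2).
have mle : forall xi : {set 'I_m}, mincut tl hd xi t <= #|xi|.
  by move=> xi; apply: mincut_le; exact: sep_refl.
tfae.
- by move=> h1 xi cx _; apply: h1; rewrite -cx mle.
- by move=> h2 xi cx; apply: key => //; exact: leq_trans (mle xi) cx.
- move=> h3 xi hxi; apply: key => // eta ce _; apply: h3; by rewrite ce.
Qed.
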